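(* Let $V$ be a real vector space of dimension $2n$ endowed with a linear map $J:V\to V$ with $J^2=-\mathrm{Id}$, and let $T_1,T_2$ be two $(0,6)$-tensors on $V$ such that, for $i=1,2$ and all $x_1,\dots,x_6\in V$: (a) $T_i(x_1,x_2,x_3,x_4,x_5,x_6)=-T_i(x_2,x_1,x_3,x_4,x_5,x_6)=-T_i(x_1,x_2,x_4,x_3,x_5,x_6)=T_i(x_3,x_4,x_1,x_2,x_5,x_6)$; (b) $T_i(x_1,x_2,x_3,x_4,x_5,x_6)+T_i(x_1,x_3,x_4,x_2,x_5,x_6)+T_i(x_1,x_4,x_2,x_3,x_5,x_6)=0$; (c) $T_i(x_1,x_2,x_3,x_4,x_5,x_6)=T_i(Jx_1,Jx_2,x_3,x_4,x_5,x_6)=T_i(x_1,x_2,Jx_3,Jx_4,x_5,x_6)$; (d) $T_i(x_1,x_2,x_3,x_4,x_5,x_6)=-T_i(x_1,x_2,x_3,x_4,x_6,x_5)=T_i(x_1,x_2,x_3,x_4,Jx_5,Jx_6)$. If $T_1(u,Ju,Ju,u,v,Jv)=T_2(u,Ju,Ju,u,v,Jv)$ for all $u,v\in V$, then $T_1=T_2$. *)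

(* Defs.v *)
From HB Require Import structures.
From mathcomp Require Import all_boot all_order all_algebra.
From mathcomp Require Import reals.
Set Implicit Arguments. Unset Strict Implicit. Unset Printing Implicit Defensive.
Import Order.TTheory GRing.Theory Num.Theory.
Local Open Scope ring_scope.

Definition tensor6 (R : realType) (V : vectType R) := V -> V -> V -> V -> V -> V -> R.

Definition multilinear6 (R : realType) (V : vectType R) (T : tensor6 V) : Prop :=
  forall (a : R) (x y x1 x2 x3 x4 x5 x6 : V),
    T (a *: x + y) x2 x3 x4 x5 x6 = a * T x x2 x3 x4 x5 x6 + T y x2 x3 x4 x5 x6 /\
    T x1 (a *: x + y) x3 x4 x5 x6 = a * T x1 x x3 x4 x5 x6 + T x1 y x3 x4 x5 x6 /\
    T x1 x2 (a *: x + y) x4 x5 x6 = a * T x1 x2 x x4 x5 x6 + T x1 x2 y x4 x5 x6 /\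
    T x1 x2 x3 (a *: x + y) x5 x6 = a * T x1 x2 x3 x x5 x6 + T x1 x2 x3 y x5 x6 /\
    T x1 x2 x3 x4 (a *: x + y) x6 = a * T x1 x2 x3 x4 x x6 + T x1 x2 x3 x4 y x6 /\
    T x1 x2 x3 x4 x5 (a *: x + y) = a * T x1 x2 x3 x4 x5 x + T x1 x2 x3 x4 x5 y.

Definition sym_conditions (R : realType) (V : vectType R) (J : V -> V) (T : tensor6 V) : Prop :=
  forall x1 x2 x3 x4 x5 x6 : V,
    T x1 x2 x3 x4 x5 x6 = - T x2 x1 x3 x4 x5 x6 /\
    T x1 x2 x3 x4 x5 x6 = - T x1 x2 x4 x3 x5 x6 /\
    T x1 x2 x3 x4 x5 x6 = T x3 x4 x1 x2 x5 x6 /\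
    T x1 x2 x3 x4 x5 x6 + T x1 x3 x4 x2 x5 x6 + T x1 x4 x2 x3 x5 x6 = 0 /\
    T x1 x2 x3 x4 x5 x6 = T (J x1) (J x2) x3 x4 x5 x6 /\
    T x1 x2 x3 x4 x5 x6 = T x1 x2 (J x3) (J x4) x5 x6 /\
    T x1 x2 x3 x4 x5 x6 = - T x1 x2 x3 x4 x6 x5 /\
    T x1 x2 x3 x4 x5 x6 = T x1 x2 x3 x4 (J x5) (J x6).

(* Main.v *)
Require Import Defs.
From HB Require Import structures.
From mathcomp Require Import all_boot all_order all_algebra.
From mathcomp Require Import reals.
From mathcomp Require Import lra.
Import Order.TTheory GRing.Theory Num.Theory.
Local Open Scope ring_scope.


Lemma lin_all (R : realType) (V : vectType R) (T : tensor6 V) (hT : multilinear6 T)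
  (x y x1 x2 x3 x4 x5 x6 : V) :
    T (x + y) x2 x3 x4 x5 x6 = T x x2 x3 x4 x5 x6 + T y x2 x3 x4 x5 x6 /\
    T x1 (x + y) x3 x4 x5 x6 = T x1 x x3 x4 x5 x6 + T x1 y x3 x4 x5 x6 /\
    T x1 x2 (x + y) x4 x5 x6 = T x1 x2 x x4 x5 x6 + T x1 x2 y x4 x5 x6 /\
    T x1 x2 x3 (x + y) x5 x6 = T x1 x2 x3 x x5 x6 + T x1 x2 x3 y x5 x6 /\
    T x1 x2 x3 x4 (x + y) x6 = T x1 x2 x3 x4 x x6 + T x1 x2 x3 x4 y x6 /\
    T x1 x2 x3 x4 x5 (x + y) = T x1 x2 x3 x4 x5 x + T x1 x2 x3 x4 x5 y.
Proof. by have := hT 1 x y x1 x2 x3 x4 x5 x6; rewrite scale1r !mul1r. Qed.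

Lemma neg_all (R : realType) (V : vectType R) (T : tensor6 V) (hT : multilinear6 T)
  (x x1 x2 x3 x4 x5 x6 : V) :
    T (- x) x2 x3 x4 x5 x6 = - T x x2 x3 x4 x5 x6 /\
    T x1 (- x) x3 x4 x5 x6 = - T x1 x x3 x4 x5 x6 /\
    T x1 x2 (- x) x4 x5 x6 = - T x1 x2 x x4 x5 x6 /\
    T x1 x2 x3 (- x) x5 x6 = - T x1 x2 x3 x x5 x6 /\
    T x1 x2 x3 x4 (- x) x6 = - T x1 x2 x3 x4 x x6 /\
    T x1 x2 x3 x4 x5 (- x) = - T x1 x2 x3 x4 x5 x.
Proof.
have := hT (-1) x 0 x1 x2 x3 x4 x5 x6; rewrite scaleN1r addr0.
have := @lin_all R V T hT 0 0 x1 x2 x3 x4 x5 x6; rewrite addr0.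
case=> [z1 [z2 [z3 [z4 [z5 z6]]]]] [e1 [e2 [e3 [e4 [e5 e6]]]]].
rewrite e1 e2 e3 e4 e5 e6; repeat split; lra.
Qed.

Arguments lin_all {R V T}.
Arguments neg_all {R V T}.

Lemma kahler_zero (R : realType) (V : vectType R)
  (J : {linear V -> V}) (hJ : forall x : V, J (J x) = - x)
  (T : tensor6 V) (hT : multilinear6 T) (hS : sym_conditions J T)
  (h0 : forall u v : V, T u (J u) (J u) u v (J v) = 0) :
  forall x1 x2 x3 x4 x5 x6 : V, T x1 x2 x3 x4 x5 x6 = 0.
Proof.
have add1 x y b c d p q : T (x + y) b c d p q = T x b c d p q + T y b c d p q.
  by case: (lin_all hT x y x b c d p q).
have add2 a x y c d p q : T a (x + y) c d p q = T a x c d p q + T a y c d p q.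
  by case: (lin_all hT x y a a c d p q) => _ [].
have add3 a b x y d p q : T a b (x + y) d p q = T a b x d p q + T a b y d p q.
  by case: (lin_all hT x y a b a d p q) => _ [_ []].
have add4 a b c x y p q : T a b c (x + y) p q = T a b c x p q + T a b c y p q.
  by case: (lin_all hT x y a b c a p q) => _ [_ [_ []]].
have add5 a b c d x y q : T a b c d (x + y) q = T a b c d x q + T a b c d y q.
  by case: (lin_all hT x y a b c d a q) => _ [_ [_ [_ []]]].
have add6 a b c d p x y : T a b c d p (x + y) = T a b c d p x + T a b c d p y.
  by case: (lin_all hT x y a b c d p a) => _ [_ [_ [_ [_ ]]]].
have neg2 a x c d p q : T a (- x) c d p q = - T a x c d p q.
  by case: (neg_all hT x a a c d p q) => _ [].
have neg3 a b x d p q : T a b (- x) d p q = - T a b x d p q.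
  by case: (neg_all hT x a b a d p q) => _ [_ []].
have neg6 a b c d p x : T a b c d p (- x) = - T a b c d p x.
  by case: (neg_all hT x a b c d p a) => _ [_ [_ [_ [_ ]]]].
have neg1 x b c d p q : T (- x) b c d p q = - T x b c d p q.
  by case: (neg_all hT x x b c d p q).
have neg4 a b c x p q : T a b c (- x) p q = - T a b c x p q.
  by case: (neg_all hT x a b c a p q) => _ [_ [_ []]].
have A12 a b c d p q : T a b c d p q = - T b a c d p q by case: (hS a b c d p q).
have A34 a b c d p q : T a b c d p q = - T a b d c p q by case: (hS a b c d p q) => _ [].
have PS a b c d p q : T a b c d p q = T c d a b p q by case: (hS a b c d p q) => _ [_ []].
have Bi a b c d p q : T a b c d p q + T a c d b p q + T a d b c p q = 0
  by case: (hS a b c d p q) => _ [_ [_ []]].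
have JJ34 a b c d p q : T a b c d p q = T a b (J c) (J d) p q
  by case: (hS a b c d p q) => _ [_ [_ [_ [_ []]]]].
have D1 a b c d p q : T a b c d p q = - T a b c d q p
  by case: (hS a b c d p q) => _ [_ [_ [_ [_ [_ []]]]]].
have D2 a b c d p q : T a b c d p q = T a b c d (J p) (J q)
  by case: (hS a b c d p q) => _ [_ [_ [_ [_ [_ []]]]]].
have J12 a b c d p q : T (J a) b c d p q = - T a (J b) c d p q.
  case: (hS a (J b) c d p q) => _ [_ [_ [_ [-> _]]]].
  by rewrite hJ neg2 opprK.
have J34 a b c d p q : T a b (J c) d p q = - T a b c (J d) p q.
  by rewrite (JJ34 a b c (J d)) hJ neg4 opprK.
have hN v : J (- v) = - J v by exact: raddfN.
have hD a b : J (a + b) = J a + J b by exact: raddfD.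
have Z u p q : T u (J u) (J u) u p q = 0.
  have Zv v w : T u (J u) (J u) u v (J w) = 0.
    have := h0 u (v + w); rewrite hD add5 !add6 h0 h0.
    rewrite (D2 u (J u) (J u) u w (J v)) hJ neg6 (D1 u (J u) (J u) u (J w) v).
    lra.
  have -> : q = J (- J q) by rewrite hN hJ opprK.
  exact: Zv.
have E1 x y p q : T x (J x) (J y) y p q + 2 * T x (J y) (J x) y p q = 0.
  have hp := Z (x + y) p q; have hm := Z (x + - y) p q.
  have hx := Z x p q; have hy := Z y p q.
  rewrite !hD in hp; rewrite !hD !hN in hm.
  rewrite !(add1, add2, add3, add4) in hp.
  rewrite !(add1, add2, add3, add4) !(neg1, neg2, neg3, neg4) in hm.
  have i1 := PS y (J y) (J x) x p q; have i2 := A12 (J x) x y (J y) p q;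
  have i3 := A34 x (J x) y (J y) p q.
  have i4 := PS y (J x) (J y) x p q; have i5 := A12 (J y) x y (J x) p q.
  have i6 := A34 x (J y) y (J x) p q.
  have i7 := A12 y (J x) (J x) y p q; have i8 := J12 x y (J x) y p q.
  have i9 := J34 x (J y) y x p q.
  lra.
have K x y p q : T x y x y p q = 0.
  have E1' := E1 x y p q.
  have E2 : T x (J x) (J y) y p q - 2 * T x y x y p q = 0.
    have := E1 x (J y) p q; rewrite hJ neg3 neg2.
    have i1 := A34 x (J x) y (J y) p q; have i2 := JJ34 x y x y p q.
    lra.
  have E3 := Bi x (J x) (J y) y p q.
  have i1 := A34 x (J y) y (J x) p q; have i2 := JJ34 x y x y p q.
  lra.
have K2 x y z p q : T x y x z p q = 0.
  have := K x (y + z) p q; rewrite !(add2, add4) K K.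
  rewrite (PS x z x y); lra.
have G a b c d p q : T a b c d p q = - T c b a d p q.
  have := K2 (a + c) b d p q; rewrite !(add1, add3) K2 K2; lra.
move=> x y z w p q.
have e := Bi x y z w p q.
have i1 := G x z w y p q; have i2 := A12 w z x y p q; have i3 := PS z w x y p q.
have i4 := G x w y z p q; have i5 := A12 y w x z p q; have i6 := PS w y x z p q.
lra.
Qed.

Lemma l1 (R : realType) (a b c d : R) : a = - c -> b = - d -> a - b = - (c - d).
Proof. move=> -> ->; lra. Qed.
Lemma l2 (R : realType) (a b c d : R) : a = c -> b = d -> a - b = c - d.
Proof. by move=> -> ->. Qed.
Lemma l3 (R : realType) (a b c d e f : R) : a + b + c = 0 -> d + e + f = 0 ->
  a - d + (b - e) + (c - f) = 0.
Proof. move=> h1 h2; lra. Qed.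

Theorem mainTheorem2 (R : realType) (V : vectType R) (n : nat)
  (hdim : \dim (fullv : {vspace V}) = (2 * n)%N)
  (J : {linear V -> V}) (hJ : forall x : V, J (J x) = - x)
  (T1 T2 : tensor6 V)
  (hT1 : multilinear6 T1) (hT2 : multilinear6 T2)
  (hS1 : sym_conditions J T1) (hS2 : sym_conditions J T2)
  (heq : forall u v : V, T1 u (J u) (J u) u v (J v) = T2 u (J u) (J u) u v (J v)) :
  forall x1 x2 x3 x4 x5 x6 : V, T1 x1 x2 x3 x4 x5 x6 = T2 x1 x2 x3 x4 x5 x6.
Proof.
pose T : tensor6 V := fun a b c d p q => T1 a b c d p q - T2 a b c d p q.
have hT : multilinear6 T.
  move=> a x y x1 x2 x3 x4 x5 x6; rewrite /T.
  case: (hT1 a x y x1 x2 x3 x4 x5 x6) => [-> [-> [-> [-> [-> ->]]]]].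
  case: (hT2 a x y x1 x2 x3 x4 x5 x6) => [-> [-> [-> [-> [-> ->]]]]].
  repeat split; lra.
have hS : sym_conditions J T.
  move=> x1 x2 x3 x4 x5 x6; rewrite /T.
  case: (hS1 x1 x2 x3 x4 x5 x6) => [a1 [a2 [a3 [a4 [a5 [a6 [a7 a8]]]]]]].
  case: (hS2 x1 x2 x3 x4 x5 x6) => [b1 [b2 [b3 [b4 [b5 [b6 [b7 b8]]]]]]].
  repeat split.
  - exact: l1 a1 b1.
  - exact: l1 a2 b2.
  - exact: l2 a3 b3.
  - exact: l3 a4 b4.
  - exact: l2 a5 b5.
  - exact: l2 a6 b6.
  - exact: l1 a7 b7.
  - exact: l2 a8 b8.
have h0 u v : T u (J u) (J u) u v (J v) = 0 by rewrite /T heq subrr.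
move=> x1 x2 x3 x4 x5 x6.
have := @kahler_zero R V J hJ T hT hS h0 x1 x2 x3 x4 x5 x6; rewrite /T => /eqP.
by rewrite subr_eq0 => /eqP.
Qed.
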